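(* Let $\mathcal{C}$ be the structure described in the context. Then for every $n\in\omega$ with $n\ge1$, the formula $\bigwedge_{i<n}R(x,y_i)$ does not witness SOP$_2$ modulo $\mathrm{Th}(\mathcal{C})$.
   Context: ${}^{\omega>}2$ is the binary tree of finite $0/1$-sequences with initial-segment order $\trianglelefteq$; ${}^{n>}2$ is the set of sequences of length $<n$. A set $X$ is an antichain if its elements are pairwise $\trianglelefteq$-incomparable; a maximal antichain in ${}^{n>}2$ is an antichain $X\subseteq{}^{n>}2$ not properly contained in another antichain of ${}^{n>}2$. The language is $\{R\}$ with $R$ binary. $\mathcal{C}$ has universe the disjoint union of $A=\{a_X: X$ a maximal antichain in ${}^{n>}2$ for some $n<\omega\}$ and $B=\{b_\eta:\eta\in{}^{\omega>}2\}$, with $R^{\mathcal{C}}=\{(a_X,b_\eta):\eta\in X\}$. A formula $\psi(x,\bar z)$ witnesses SOP$_2$ modulo a theory if in a monster model there is $\langle \bar c_\eta\rangle_{\eta\in{}^{\omega>}2}$ such that $\{\psi(x,\bar c_{\eta\lceil m}):m<\omega\}$ is consistent for each $\eta\in{}^\omega2$ and $\{\psi(x,\bar c_\eta),\psi(x,\bar c_\nu)\}$ is inconsistent for all $\trianglelefteq$-incomparable $\eta,\nu$. Here $y_0,\dots,y_{n-1}$ are distinct single variables. *)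

(* Defs.v *)
From mathcomp Require Import all_boot.
Set Implicit Arguments. Unset Strict Implicit. Unset Printing Implicit Defensive.

(* Finite 0/1-sequences are [seq bool]; s ⊴ t is [prefix s t]. *)
Definition tle (s t : seq bool) : Prop := prefix s t.
Definition incomparable (s t : seq bool) : Prop := ~ tle s t /\ ~ tle t s.

Definition below (n : nat) (s : seq bool) : Prop := size s < n.

Definition antichain (X : seq bool -> Prop) : Prop :=
  forall s t, X s -> X t -> s <> t -> incomparable s t.

Definition max_antichain (n : nat) (X : seq bool -> Prop) : Prop :=
  (forall s, X s -> below n s) /\ antichain X /\
  (forall Y : seq bool -> Prop,
      antichain Y -> (forall s, Y s -> below n s) ->
      (forall s, X s -> Y s) -> (forall s, Y s -> X s)).

Definition Aset : Type :=
  { X : seq bool -> Prop | exists n : nat, max_antichain n X }.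

(* universe: disjoint union of A (inl a_X) and B (inr b_eta) *)
Definition Cuniv : Type := (Aset + seq bool)%type.

Definition CR (u w : Cuniv) : Prop :=
  match u, w with
  | inl X, inr eta => proj1_sig X eta
  | _, _ => False
  end.

Inductive form : Type :=
  | FR : nat -> nat -> form
  | FEq : nat -> nat -> form
  | FNeg : form -> form
  | FAnd : form -> form -> form
  | FEx : nat -> form -> form.

Fixpoint fv (f : form) : seq nat :=
  match f with
  | FR i j => [:: i; j]
  | FEq i j => [:: i; j]
  | FNeg g => fv g
  | FAnd g h => fv g ++ fv h
  | FEx i g => filter (fun k => k != i) (fv g)
  end.

Definition sentence (f : form) : Prop := fv f = [::].

Definition upd {M : Type} (v : nat -> M) (i : nat) (a : M) : nat -> M :=
  fun k => if k == i then a else v k.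

Fixpoint sat {M : Type} (RM : M -> M -> Prop) (v : nat -> M) (f : form) : Prop :=
  match f with
  | FR i j => RM (v i) (v j)
  | FEq i j => v i = v j
  | FNeg g => ~ sat RM v g
  | FAnd g h => sat RM v g /\ sat RM v h
  | FEx i g => exists a : M, sat RM (upd v i a) g
  end.

Definition holds {M : Type} (RM : M -> M -> Prop) (f : form) : Prop :=
  forall v : nat -> M, sat RM v f.

Definition model_of_ThC (M : Type) (RM : M -> M -> Prop) : Prop :=
  inhabited M /\
  forall f : form, sentence f -> holds CR f -> holds RM f.

Definition psi {M : Type} (RM : M -> M -> Prop) (n : nat) (x : M) (c : 'I_n -> M)
  : Prop := forall i : 'I_n, RM x (c i).

Definition restr (eta : nat -> bool) (m : nat) : seq bool := mkseq eta m.

(* psi witnesses SOP_2 modulo Th(C): in some model M of Th(C) there is a tree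
   of parameters (c_eta) such that, for each branch, the set
   {psi(x, c_{eta|m}) : m < omega} is consistent (i.e. finitely satisfiable in M,
   equivalently consistent with the elementary diagram of M / realized in a
   monster model), and for incomparable eta, nu the pair is inconsistent. *)
Definition witnesses_SOP2_ThC (n : nat) : Prop :=
  exists (M : Type) (RM : M -> M -> Prop) (c : seq bool -> 'I_n -> M),
    model_of_ThC RM /\
    (forall (eta : nat -> bool) (k : nat),
        exists x : M, forall m, m < k -> psi RM x (c (restr eta m))) /\
    (forall eta nu : seq bool, incomparable eta nu ->
        ~ exists x : M, psi RM x (c eta) /\ psi RM x (c nu)).

(* Main.v *)
Require Import Defs.
From mathcomp Require Import all_boot zify.
From Stdlib Require Import Classical.
Set Implicit Arguments. Unset Strict Implicit. Unset Printing Implicit Defensive.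

Lemma prefix_size (s t : seq bool) : prefix s t -> size s <= size t.
Proof. by move=> /prefixP [u ->]; rewrite size_cat leq_addr. Qed.

Lemma prefix_anti (s t : seq bool) : prefix s t -> prefix t s -> s = t.
Proof.
move=> st ts; move: (st); rewrite prefixE => /eqP <-.
have e : size s = size t by apply/eqP; rewrite eqn_leq !prefix_size.
by rewrite e take_size.
Qed.

Lemma prefix_common (p q r : seq bool) : prefix p r -> prefix q r -> prefix p q || prefix q p.
Proof.
rewrite !prefixE => /eqP hp /eqP hq.
case: (leqP (size p) (size q)) => h.
- by apply/orP; left; rewrite -hq take_takel // hp.
- by apply/orP; right; rewrite -hp take_takel ?(ltnW h) // hq.
Qed.

Definition emb (d N : nat) (g : seq bool -> seq bool) :=
 (forall s, size s < d -> size (g s) < N) /\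
 (forall s t, size s < d -> size t < d -> prefix s t -> prefix (g s) (g t)) /\
 (forall s t, size s < d -> size t < d -> incomparable s t -> incomparable (g s) (g t)).

Lemma emb_comp d N K g1 g2 : emb d N g1 -> emb N K g2 -> emb d K (fun s => g2 (g1 s)).
Proof.
move=> [a1 [b1 c1]] [a2 [b2 c2]]; split; [|split].
- by move=> s hs; apply: a2; apply: a1.
- by move=> s t hs ht hst; apply: b2; [apply: a1|apply: a1|apply: b1].
- by move=> s t hs ht hst; apply: c2; [apply: a1|apply: a1|apply: c1].
Qed.

Lemma emb_id d : emb d d id.
Proof. by split. Qed.

Lemma incomp_cons (b : bool) s t : incomparable (b :: s) (b :: t) <-> incomparable s t.
Proof. by rewrite /incomparable /tle /= eqxx. Qed.

Lemma emb_cons d N g (b : bool) : emb d N g -> emb d N.+1 (fun s => b :: g s).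
Proof.
move=> [a [p c]]; split; [|split].
- by move=> s hs /=; rewrite ltnS a.
- by move=> s t hs ht hst /=; rewrite eqxx p.
- by move=> s t hs ht hst; apply/incomp_cons; apply: c.
Qed.

Definition glue (r : seq bool) (g0 g1 : seq bool -> seq bool) (s : seq bool) :=
  match s with [::] => r | false :: s' => false :: g0 s' | true :: s' => true :: g1 s' end.

Lemma emb_glue d N g0 g1 : emb d N g0 -> emb d N g1 -> emb d.+1 N.+1 (glue [::] g0 g1).
Proof.
move=> [a0 [p0 c0]] [a1 [p1 c1]]; split; [|split].
- by case=> [|[] s] //= hs; rewrite ltnS ?a0 ?a1.
- case=> [|x s] [|y t] //= hs ht; first by rewrite prefix0s.
  move=> /andP [/eqP <- hst]; case: x hs ht => /= hs ht; rewrite ?eqxx /=.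
  + by apply: p1.
  + by apply: p0.
- case=> [|x s] [|y t] //= hs ht.
  + by move=> [h _]; exfalso; apply: h; rewrite /tle prefix0s.
  + by move=> [_ h]; exfalso; apply: h; rewrite /tle prefix0s.
  case: x y hs ht => [] [] /= hs ht.
  + by move/incomp_cons => h; apply/incomp_cons; apply: c1.
  + by rewrite /incomparable /tle /=.
  + by rewrite /incomparable /tle /=.
  + by move/incomp_cons => h; apply/incomp_cons; apply: c0.
Qed.

Lemma ramsey2 a b (P : seq bool -> Prop) :
  (exists g, emb a (a + b) g /\ forall s, size s < a -> P (g s)) \/
  (exists g, emb b (a + b) g /\ forall s, size s < b -> ~ P (g s)).
Proof.
elim: a b P => [|a IHa] b P.
  by left; exists id; split => //; split.
elim: b P => [|b IHb] P.
  by right; exists id; split => //; split.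
case: (classic (P [::])) => hP.
- have := IHa b.+1 (fun s => P (false :: s)); have := IHa b.+1 (fun s => P (true :: s)).
  move=> [[g1 [e1 h1]]|[g1 [e1 h1]]]; last first.
    right; exists (fun s => true :: g1 s); split; last by [].
    by rewrite addSn; apply: emb_cons.
  move=> [[g0 [e0 h0]]|[g0 [e0 h0]]]; last first.
    right; exists (fun s => false :: g0 s); split; last by [].
    by rewrite addSn; apply: emb_cons.
  left; exists (glue [::] g0 g1); split.
    by rewrite addSn; apply: emb_glue.
  by case=> [|[] s] //= hs; [apply: h1|apply: h0].
- have := IHb (fun s => P (false :: s)); have := IHb (fun s => P (true :: s)).
  move=> [[g1 [e1 h1]]|[g1 [e1 h1]]].
    left; exists (fun s => true :: g1 s); split; last by [].
    by rewrite addnS; apply: emb_cons.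
  move=> [[g0 [e0 h0]]|[g0 [e0 h0]]].
    left; exists (fun s => false :: g0 s); split; last by [].
    by rewrite addnS; apply: emb_cons.
  right; exists (glue [::] g0 g1); split.
    by rewrite addnS; apply: emb_glue.
  by case=> [|[] s] //= hs; [apply: h1|apply: h0].
Qed.
Lemma ramseyL (X : eqType) (L : seq X) d : exists N, forall col : seq bool -> X -> Prop,
  (forall s, size s < N -> exists2 x, x \in L & col s x) ->
  exists g x, [/\ x \in L, emb d N g & forall s, size s < d -> col (g s) x].
Proof.
elim: L => [|x0 L IH].
  by exists 1 => col h; have [x] := h [::] isT.
have [N' HN'] := IH; exists (d + N') => col h.
have [[g [eg hg]]|[g [eg hg]]] := ramsey2 d N' (fun s => col s x0).
  by exists g, x0; split => //; rewrite inE eqxx.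
have [|g' [x [xL eg' hg']]] := HN' (fun s => col (g s)).
  move=> s hs; have [x] := h (g s) (proj1 eg s hs).
  rewrite inE => /orP [/eqP -> cx|xL cx]; last by exists x.
  by exfalso; apply: (hg s hs).
exists (fun s => g (g' s)), x; split.
- by rewrite inE xL orbT.
- exact: emb_comp eg' eg.
- by move=> s hs; apply: hg'.
Qed.

Lemma ramseyMulti (X : eqType) (L : seq X) (I : seq (seq bool)) d : exists N,
  forall col : seq bool -> seq bool -> X -> Prop,
  (forall t, t \in I -> forall u, size u < N -> exists2 x, x \in L & col t u x) ->
  exists g, emb d N g /\ forall t, t \in I -> exists2 x, x \in L &
      forall u, size u < d -> col t (g u) x.
Proof.
elim: I => [|t0 I IH].
  by exists d => col _; exists id; split => //; apply: emb_id.
have [N' HN'] := IH; have [N HN] := ramseyL L N'.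
exists N => col h.
have [|g1 [x0 [x0L eg1 hg1]]] := HN (col t0).
  by move=> u hu; apply: h => //; rewrite inE eqxx.
have [|g2 [eg2 hg2]] := HN' (fun t u x => col t (g1 u) x).
  by move=> t tI u hu; apply: h; [rewrite inE tI orbT|exact: (proj1 eg1)].
exists (fun u => g1 (g2 u)); split; first exact: emb_comp eg2 eg1.
move=> t; rewrite inE => /orP [/eqP ->|tI].
  by exists x0 => // u hu; apply: hg1; apply: (proj1 eg2).
exact: hg2.
Qed.

Fixpoint allnodes k : seq (seq bool) :=
  if k is k'.+1 then [::] :: (map (cons false) (allnodes k') ++ map (cons true) (allnodes k'))
  else [::].

Lemma mem_allnodes k s : (s \in allnodes k) = (size s < k).
Proof.
elim: k s => [|k IH] s /=; first by rewrite in_nil ltn0.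
case: s => [|b s]; first by rewrite inE eqxx.
rewrite in_cons /= mem_cat ltnS -IH.
apply/idP/idP.
  by move=> /orP [/mapP [t tI [_ ->]]|/mapP [t tI [_ ->]]].
by move=> h; case: b; apply/orP; [right|left]; apply/mapP; exists s.
Qed.

Section Comb.
Variable M : Type.
Variable D : M -> M -> Prop.
Hypothesis Ax4 : forall x x' z z', D x x' -> D z z' -> ~ D x z -> ~ D x z' -> ~ D x' z ->
  ~ D x' z' -> x = x' \/ z = z'.

Definition config n d (S : seq bool -> nat -> M) :=
 (forall s t i j, size s < d -> size t < d -> prefix s t -> i < n -> j < n -> D (S s i) (S t j)) /\
 (forall s t, size s < d -> size t < d -> incomparable s t ->
    exists i j, [/\ i < n, j < n & ~ D (S s i) (S t j)]).

Lemma config_emb n d N K S g (b : bool) : config n K S -> emb d N g -> N < K ->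
  config n d (fun t => S (b :: g t)).
Proof.
move=> [h1 h2] [e1 [e2 e3]] NK; split.
- move=> s t i j hs ht st hi hj; apply: h1 => //=.
  + by apply: leq_ltn_trans NK; apply: e1.
  + by apply: leq_ltn_trans NK; apply: e1.
  + by rewrite eqxx e2.
- move=> s t hs ht st; apply: h2 => /=.
  + by apply: leq_ltn_trans NK; apply: e1.
  + by apply: leq_ltn_trans NK; apply: e1.
  + by apply/incomp_cons; apply: e3.
Qed.

Lemma config_del n d S j : config n.+1 d S -> j < n.+1 ->
  (forall t, size t < d -> S t j = S [::] j) ->
  config n d (fun t k => S t (if k < j then k else k.+1)).
Proof.
move=> [h1 h2] hj hc; split.
- move=> s t i k hs ht st hi hk; apply: h1 => //; case: ifP => _; lia.
- move=> s t hs ht st; have [i1 [i2 [hi1 hi2 nD]]] := h2 s t hs ht st.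
  case: (eqVneq i1 j) => [e1|n1].
    exfalso; apply: nD; rewrite e1 hc // -(hc t) //.
    by apply: h1 => //; rewrite prefix_refl.
  case: (eqVneq i2 j) => [e2|n2].
    exfalso; apply: nD; rewrite e2 hc // -(hc s) //.
    by apply: h1 => //; rewrite prefix_refl.
  exists (if i1 < j then i1 else i1.-1), (if i2 < j then i2 else i2.-1).
  have f : forall i, i < n.+1 -> i != j -> (if i < j then i else i.-1) < n /\
     (if (if i < j then i else i.-1) < j then (if i < j then i else i.-1)
      else (if i < j then i else i.-1).+1) = i.
    move=> i hi nij; case: (ltnP i j) => ij.
      by rewrite ij; split => //; lia.
    have ij' : j < i by rewrite ltn_neqAle eq_sym nij ij.
    have -> : (i.-1 < j) = false by apply/negbTE; rewrite -leqNgt; lia.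
    split; lia.
  have [f1 g1] := f i1 hi1 n1; have [f2 g2] := f i2 hi2 n2.
  by split => //; rewrite g1 g2.
Qed.

End Comb.

Section Comb2.
Variable M : Type.
Variable D : M -> M -> Prop.
Hypothesis Ax4 : forall x x' z z', D x x' -> D z z' -> ~ D x z -> ~ D x z' -> ~ D x' z ->
  ~ D x' z' -> x = x' \/ z = z'.

Lemma noconfig n : exists d, forall S, ~ config D n d S.
Proof.
elim: n => [|n [d0 IH]].
  exists 2 => S [_ h2].
  have [|i [j [hi _ _]]] := h2 [:: false] [:: true] isT isT; last by [].
  by rewrite /incomparable /tle.
pose LP := [seq (i, j) | i <- iota 0 n.+1, j <- iota 0 n.+1].
have [NA HA] := ramseyL LP d0.
have [NB HB] := ramseyMulti LP (allnodes NA) d0.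
exists (maxn NA NB).+1 => S cS.
have d0pos : 0 < d0.
  case: d0 IH {HA HB} => // IH; exfalso; apply: (IH S).
  by rewrite /config; split; move=> s t; rewrite ltn0.
have [|gB [eB hB]] := HB (fun t u (x : nat * nat) =>
    ~ D (S (false :: t) x.1) (S (true :: u) x.2)).
  move=> t; rewrite mem_allnodes => ht u hu.
  have [||| i [j [hi hj nD]]] := cS.2 (false :: t) (true :: u).
  - by rewrite /= ltnS leq_max ht.
  - by rewrite /= ltnS leq_max hu orbT.
  - by rewrite /incomparable /tle.
  by exists (i, j) => //; apply/allpairsP; exists (i, j); split => //; rewrite mem_iota /=; lia.
have [|gA [[i j] [ijL eA hA]]] := HA (fun t (x : nat * nat) => forall u, size u < d0 ->
    ~ D (S (false :: t) x.1) (S (true :: gB u) x.2)).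
  by move=> t ht; apply: hB; rewrite mem_allnodes.
have [hi hj] : i < n.+1 /\ j < n.+1.
  case/allpairsP: ijL => [[i' j'] [hi' hj' e]]; rewrite !mem_iota in hi' hj'.
  by case: e => -> ->; simpl in *; lia.
have cA := config_emb false cS eA (leq_ltn_trans (leq_maxl NA NB) (ltnSn _)).
have cB := config_emb true cS eB (leq_ltn_trans (leq_maxr NA NB) (ltnSn _)).
set SA := (fun t => S (false :: gA t)) in cA.
set SB := (fun t => S (true :: gB t)) in cB.
have mono : forall t u, size t < d0 -> size u < d0 -> ~ D (SA t i) (SB u j).
  by move=> t u ht hu; apply: hA.
case: (classic (forall t, size t < d0 -> SA t i = SA [::] i)) => hc.
  exact: IH _ (config_del cA hi hc).
apply: IH _ (config_del cB hj _).
have [t htn] := not_all_ex_not _ _ hc.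
have [ht ne] := imply_to_and _ _ htn.
move=> u hu.
have [||||||e|e] := Ax4 (x := SA [::] i) (x' := SA t i) (z := SB [::] j) (z' := SB u j).
- by apply: cA.1 => //; rewrite prefix0s.
- by apply: cB.1 => //; rewrite prefix0s.
- exact: mono.
- exact: mono.
- exact: mono.
- exact: mono.
- by exfalso; apply: ne.
- by [].
Qed.
End Comb2.

Definition fimp p q := FNeg (FAnd p (FNeg q)).
Definition fall i p := FNeg (FEx i (FNeg p)).
Definition for_ p q := FNeg (FAnd (FNeg p) (FNeg q)).
Definition fD a i j := FEx a (FAnd (FR a i) (FR a j)).
Definition TT := FEx 0 (FEq 0 0).
Definition fbig (l : seq nat) (F : nat -> form) := foldr (fun a acc => FAnd (F a) acc) TT l.
Fixpoint Fa k f := if k is k'.+1 then Fa k' (fall k' f) else f.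
Definition phiBody k := fimp (fbig (iota 0 k) (fun a => fbig (iota 0 k) (fun b => fD k.+1 a b)))
  (FEx k (fbig (iota 0 k) (fun a => FR k a))).
Definition Phi k := Fa k (phiBody k).
Definition ax4body := fimp (FAnd (fD 4 0 1) (FAnd (fD 4 2 3) (FAnd (FNeg (fD 4 0 2))
  (FAnd (FNeg (fD 4 0 3)) (FAnd (FNeg (fD 4 1 2)) (FNeg (fD 4 1 3)))))))
  (for_ (FEq 0 1) (FEq 2 3)).
Definition ax4 := Fa 4 ax4body.

Section Sem.
Variable M : Type.
Variable RM : M -> M -> Prop.

Lemma sat_ext f : forall v w, (forall x, v x = w x) -> (sat RM v f <-> sat RM w f).
Proof.
elim: f => [i j|i j|g IH|g IHg h IHh|i g IH] v w e /=.
- by rewrite !e.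
- by rewrite !e.
- by rewrite (IH v w e).
- by rewrite (IHg v w e) (IHh v w e).
- split=> [[a ha]|[a ha]]; exists a.
  + by apply: (proj1 (IH (upd v i a) (upd w i a) _) ha) => x; rewrite /upd e.
  + by apply: (proj2 (IH (upd v i a) (upd w i a) _) ha) => x; rewrite /upd e.
Qed.

Lemma Fa_intro k f : (forall w, sat RM w f) -> forall v, sat RM v (Fa k f).
Proof.
elim: k f => [|k IH] f h //= v.
by apply: IH => w /= [a]; apply.
Qed.

Lemma Fa_elim k f v : sat RM v (Fa k f) ->
  forall w, sat RM (fun x => if x < k then w x else v x) f.
Proof.
elim: k f => [|k IH] f /=.
  by move=> h w; apply: (proj1 (@sat_ext f v _ _) h) => x //=.
move=> h w; have := IH _ h w => /= h2.
apply: NNPP => nf; apply: h2; exists (w k).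
move=> hs; apply: nf; apply: (proj1 (@sat_ext f _ _ _) hs) => x.
rewrite /upd ltnS; by case: (ltngtP x k) => //= ->.
Qed.

Lemma fbig_iff v l F : sat RM v (fbig l F) <-> (forall a, a \in l -> sat RM v (F a)).
Proof.
elim: l => [|a l IH] /=.
  by split=> // _; exists (v 0).
rewrite IH; split.
  by move=> [h1 h2] b; rewrite inE => /orP [/eqP ->|/h2].
by move=> h; split; [apply: h; rewrite inE eqxx|move=> b hb; apply: h; rewrite inE hb orbT].
Qed.

End Sem.

Lemma fv_Fa k f x : x \in fv (Fa k f) -> x \in fv f /\ k <= x.
Proof.
elim: k f => [|k IH] f //= h.
have [h1 h2] := IH _ h; move: h1; rewrite /= mem_filter => /andP [xk xf].
by split => //; rewrite ltn_neqAle eq_sym xk h2.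
Qed.

Lemma fv_fbig l F x : x \in fv (fbig l F) -> exists2 a, a \in l & x \in fv (F a).
Proof.
elim: l => [|a l IH] //=; rewrite mem_cat => /orP [h|/IH [b bl hb]].
  by exists a => //; rewrite inE eqxx.
by exists b => //; rewrite inE bl orbT.
Qed.

Lemma fv_fD c a b x : x \in fv (fD c a b) -> x = a \/ x = b.
Proof.
have -> : fv (fD c a b) = [seq k <- [:: c; a; c; b] | k != c] by [].
rewrite mem_filter !inE => /andP [xc]; rewrite (negbTE xc) /= => /orP [/eqP ->|/eqP ->]; auto.
Qed.

Lemma fv_FR_ex k x : x \in fv (FEx k (fbig (iota 0 k) (fun a => FR k a))) -> x < k.
Proof.
have -> : fv (FEx k (fbig (iota 0 k) (fun a => FR k a))) =
  [seq y <- fv (fbig (iota 0 k) (fun a => FR k a)) | y != k] by [].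
rewrite mem_filter => /andP [xk /fv_fbig [b bl]].
have -> : fv (FR k b) = [:: k; b] by [].
rewrite !inE => /orP [/eqP e|/eqP e]; first by rewrite e eqxx in xk.
by move: bl; rewrite mem_iota e; lia.
Qed.

Lemma sentence_Phi k : sentence (Phi k).
Proof.
rewrite /sentence.
suff : forall x, x \notin fv (Phi k) by case: (fv (Phi k)) => // x s /(_ x); rewrite inE eqxx.
move=> x; apply/negP => /fv_Fa [h kx].
move: h; have -> : fv (phiBody k) = fv (fbig (iota 0 k) (fun a => fbig (iota 0 k) (fun b => fD k.+1 a b)))
  ++ fv (FEx k (fbig (iota 0 k) (fun a => FR k a))) by [].
rewrite !mem_cat => /orP [].
  move=> /fv_fbig [a al /fv_fbig [b bl /fv_fD [] e]]; move: al bl kx; rewrite !mem_iota e; lia.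
by move=> /fv_FR_ex; lia.
Qed.

Lemma sentence_ax4 : sentence ax4.
Proof. by []. Qed.

Lemma incomp_sym s t : incomparable s t -> incomparable t s.
Proof. by case. Qed.

Lemma prefix_same_size (s t : seq bool) : prefix s t -> size s = size t -> s = t.
Proof. by rewrite prefixE => /eqP h e; rewrite -h e take_size. Qed.

Lemma max_size (F : seq (seq bool)) p : p \in F -> size p <= foldr maxn 0 (map size F).
Proof.
elim: F => [|a F IH] //=; rewrite inE => /orP [/eqP ->|/IH h]; first by rewrite leq_maxl.
by rewrite leq_max h orbT.
Qed.

Lemma ext_antichain (F : seq (seq bool)) :
  (forall p q, p \in F -> q \in F -> p = q \/ incomparable p q) ->
  exists X : Aset, forall p, p \in F -> proj1_sig X p.
Proof.
move=> hF; set m := foldr maxn 0 (map size F).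
have hm : forall p, p \in F -> size p <= m by move=> p; apply: max_size.
clearbody m.
pose X := fun p => p \in F \/ (size p = m.+1 /\ forall f, f \in F -> incomparable f p).
have mx : max_antichain m.+2 X.
  split; [|split].
  - move=> s [hs|[hs _]]; rewrite /below; last by rewrite hs.
    by rewrite ltnS; apply: leq_trans (hm s hs) (leqnSn _).
  - move=> s t [hs|[ss hs]] [ht|[st ht]] ne.
    + by case: (hF s t hs ht).
    + exact: ht s hs.
    + exact: incomp_sym (hs t ht).
    + split => h; apply: ne.
        by apply: (prefix_same_size h); rewrite ss st.
      by apply/esym; apply: (prefix_same_size h); rewrite ss st.
  - move=> Y hY hYb hXY s Ys.
    case: (boolP (s \in F)) => sF; first by left.
    pose s' := s ++ nseq (m.+1 - size s) false.
    have ss' : size s' = m.+1.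
      by rewrite size_cat size_nseq; have := hYb s Ys; rewrite /below; lia.
    have pss' : prefix s s' by apply: prefix_prefix.
    case: (classic (forall f, f \in F -> incomparable f s')) => hc.
    + have Xs' : X s' by right.
      case: (classic (s = s')) => [e|ne]; first by rewrite e.
      by have [h _] := hY s s' Ys (hXY _ Xs') ne; exfalso; apply: h.
    + have [f hf] := not_all_ex_not _ _ hc; have [fF nf] := imply_to_and _ _ hf.
      have pf : prefix f s'.
        apply: NNPP => npf; apply: nf; split => // h2.
        by move: (leq_trans (prefix_size h2) (hm f fF)); rewrite ss' ltnn.
      have Yf : Y f by apply: hXY; left.
      have nsf : s <> f by move=> e; rewrite e fF in sF.
      have [h1 h2] := hY s f Ys Yf nsf.
      by exfalso; case/orP: (prefix_common pss' pf) => h; [apply: h1 | apply: h2].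
by exists (exist _ X (ex_intro _ m.+2 mx)) => p hp; left.
Qed.

Definition DC (u w : Cuniv) := exists a, CR a u /\ CR a w.

Lemma CD_inr p q : DC (inr p) (inr q) <-> (p = q \/ incomparable p q).
Proof.
split.
  move=> [[X|?] [h1 h2]] //=.
  have [N [_ [anti _]]] := proj2_sig X.
  by case: (classic (p = q)) => e; [left|right; exact: anti p q h1 h2 e].
move=> h; have [|X hX] := @ext_antichain [:: p; q].
  move=> x y; rewrite !inE => /orP [/eqP ->|/eqP ->] /orP [/eqP ->|/eqP ->]; try by left.
    by [].
  by case: h => [e|i]; [left|right; apply: incomp_sym].
by exists (inl X); split; apply: hX; rewrite !inE eqxx ?orbT.
Qed.

Lemma CR_inr a u : CR a u -> exists p, u = inr p.
Proof. by case: a; case: u => // p X _; exists p. Qed.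

Definition cmp (x y : seq bool) := prefix x y || prefix y x.

Lemma L1 p p' q : cmp p q -> cmp p' q -> ~~ cmp p p' -> prefix q p && prefix q p'.
Proof.
rewrite /cmp => /orP [pq|qp] /orP [p'q|qp'] npp'.
- by rewrite (prefix_common pq p'q) in npp'.
- by rewrite (prefix_trans pq qp') in npp'.
- by rewrite (prefix_trans p'q qp) orbT in npp'.
- by rewrite qp qp'.
Qed.

Lemma cmpC x y : cmp x y = cmp y x.
Proof. by rewrite /cmp orbC. Qed.

Lemma tree4 p p' q q' : ~~ cmp p p' -> ~~ cmp q q' -> cmp p q -> cmp p q' ->
  cmp p' q -> cmp p' q' -> False.
Proof.
move=> npp nqq cpq cpq' cp'q cp'q'.
have /andP [qp _] := L1 cpq cp'q npp.
have /andP [pq _] : prefix p q && prefix p q' by apply: L1; rewrite // cmpC.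
have e := prefix_anti pq qp; subst q.
have /andP [q'p _] := L1 cpq' cp'q' npp.
by rewrite /cmp q'p orbT in nqq.
Qed.

Lemma C_ax4 : holds CR ax4.
Proof.
move=> v; apply: Fa_intro => w; rewrite /ax4body /= /upd /=.
move=> [[h01 [h23 [n02 [n03 [n12 n13]]]]] hor].
have [p e0] : exists p, w 0 = inr p by case: h01 => a [h _]; exact: CR_inr h.
have [p' e1] : exists p, w 1 = inr p by case: h01 => a [_ h]; exact: CR_inr h.
have [q e2] : exists p, w 2 = inr p by case: h23 => a [h _]; exact: CR_inr h.
have [q' e3] : exists p, w 3 = inr p by case: h23 => a [_ h]; exact: CR_inr h.
rewrite e0 e1 e2 e3 in h01 h23 n02 n03 n12 n13 hor.
apply: hor => -[ne01 ne23].
case: (proj1 (CD_inr _ _) h01) => [e|i01]; first by apply: ne01; rewrite e.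
case: (proj1 (CD_inr _ _) h23) => [e|i23]; first by apply: ne23; rewrite e.
have cm : forall x y, ~ DC (inr x) (inr y) -> cmp x y.
  move=> x y nd; apply: NNPP => nc; apply: nd; apply/CD_inr; right.
  by rewrite /cmp in nc; split => h; apply: nc; rewrite h ?orbT.
have ni : forall x y, incomparable x y -> ~~ cmp x y.
  by move=> x y [h1 h2]; rewrite /cmp; apply/norP; split; apply/negP.
exact: (tree4 (ni _ _ i01) (ni _ _ i23) (cm _ _ n02) (cm _ _ n03) (cm _ _ n12) (cm _ _ n13)).
Qed.

Lemma neq_lt a k : a < k -> (a == k) = false.
Proof. by move=> h; apply/negbTE; rewrite neq_ltn h. Qed.

Lemma C_Phi k : holds CR (Phi k).
Proof.
move=> v; apply: Fa_intro => w; rewrite /phiBody.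
move=> [hP nQ]; apply: nQ.
have mi : forall a, a < k -> a \in iota 0 k by move=> a h; rewrite mem_iota add0n h.
have im : forall a, a \in iota 0 k -> a < k by move=> a; rewrite mem_iota add0n /=.
have hD : forall a b, a < k -> b < k -> DC (w a) (w b).
  move=> a b ha hb.
  have := proj1 (fbig_iff _ _ _ _) hP a (mi a ha).
  move=> /fbig_iff /(_ b (mi b hb)) [m [h1 h2]].
  exists m; move: h1 h2; rewrite /upd eqxx (neq_lt (leqW ha)) (neq_lt (leqW hb)).
  by split.
pose p a := if w a is inr q then q else [::].
have ep : forall a, a < k -> w a = inr (p a).
  by move=> a ha; have [m [h _]] := hD a a ha ha; have [q eq] := CR_inr h; rewrite /p eq.
have [|X hX] := @ext_antichain (map p (iota 0 k)).
  move=> x y /mapP [a /im ha ->] /mapP [b /im hb ->].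
  by apply/CD_inr; rewrite -!ep //; apply: hD.
exists (inl X); apply/fbig_iff => a ha; rewrite /= /upd eqxx.
have ak : a < k by apply: im.
rewrite (neq_lt ak) ep //=; apply: hX; apply: map_f; exact: mi.
Qed.

Section MSide.
Variable M : Type.
Variable RM : M -> M -> Prop.
Hypothesis hmod : model_of_ThC RM.
Definition DM (u w : M) := exists a, RM a u /\ RM a w.

Lemma M_ax4 x x' z z' : DM x x' -> DM z z' -> ~ DM x z -> ~ DM x z' -> ~ DM x' z ->
  ~ DM x' z' -> x = x' \/ z = z'.
Proof.
move=> h01 h23 n02 n03 n12 n13.
have H := hmod.2 ax4 sentence_ax4 C_ax4 (fun _ => x).
have := Fa_elim H (fun i => nth x [:: x; x'; z; z'] i).
rewrite /ax4body /= /upd /= => H'.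
apply: NNPP => nor; apply: H'; split; first by do !split.
by move=> h; apply: h; split => e; apply: nor; [left|right].
Qed.

Lemma M_Phi k (w : nat -> M) : (forall a b, a < k -> b < k -> DM (w a) (w b)) ->
  exists m, forall a, a < k -> RM m (w a).
Proof.
move=> hD.
have mi : forall a, a < k -> a \in iota 0 k by move=> a h; rewrite mem_iota add0n h.
have im : forall a, a \in iota 0 k -> a < k by move=> a; rewrite mem_iota add0n /=.
have H := hmod.2 (Phi k) (sentence_Phi k) (C_Phi k) w.
have H2 := Fa_elim H w.
have H3 : sat RM w (phiBody k).
  by apply: (proj1 (@sat_ext M RM (phiBody k) _ w _) H2) => x /=; case: ifP.
apply: NNPP => nQ; apply: H3; split.
  apply/fbig_iff => a /im ha; apply/fbig_iff => b /im hb.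
  have [m [h1 h2]] := hD a b ha hb; exists m.
  by rewrite /= /upd eqxx (neq_lt (leqW ha)) (neq_lt (leqW hb)).
move=> [m hm]; apply: nQ; exists m => a ak.
have := proj1 (fbig_iff _ _ _ _) hm a (mi a ak).
by rewrite /= /upd eqxx (neq_lt ak).
Qed.
End MSide.

Lemma restr_take (t : seq bool) m : m <= size t -> restr (fun k => nth false t k) m = take m t.
Proof.
move=> hm; rewrite /restr; apply: (@eq_from_nth _ false).
  by rewrite size_mkseq size_takel.
by move=> i; rewrite size_mkseq => hi; rewrite nth_mkseq // nth_take.
Qed.

Theorem proposition6p5 :
  forall n : nat, 1 <= n -> ~ witnesses_SOP2_ThC n.
Proof.
case=> [|n] // _ [M [RM [c [hmod [hbr hinc]]]]].
pose S := fun s (i : nat) => c s (inord i).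
have [d Hd] := noconfig (@M_ax4 M RM hmod) n.+1.
have P1 : forall s t i j, prefix s t -> i < n.+1 -> j < n.+1 -> DM RM (S s i) (S t j).
  move=> s t i j st hi hj.
  pose eta := fun m => nth false t m.
  have [x hx] := hbr eta (size t).+1.
  exists x; split.
  - have hl : size s < (size t).+1 by rewrite ltnS (prefix_size st).
    have := hx (size s) hl (inord i); rewrite /eta restr_take ?(prefix_size st) //.
    by move: st; rewrite prefixE => /eqP ->.
  - by have := hx (size t) (ltnSn _) (inord j); rewrite /eta restr_take // take_size.
suff: config (DM RM) n.+1 d S by move/Hd.
split.
  by move=> s t i j _ _; apply: P1.
move=> s t hs ht st; apply: NNPP => nex; apply: (hinc s t st).
have hD : forall i j, i < n.+1 -> j < n.+1 -> DM RM (S s i) (S t j).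
  move=> i j hi hj; apply: NNPP => nd; apply: nex; exists i, j; split => //.
have hDs : forall x y, DM RM x y -> DM RM y x by move=> x y [a [h1 h2]]; exists a.
have [|m hm] := @M_Phi M RM hmod (n.+1 + n.+1)
   (fun a => if a < n.+1 then S s a else S t (a - n.+1)).
  move=> a b ha hb; case: ifP => ha'; case: ifP => hb'.
  - by apply: P1 => //; rewrite prefix_refl.
  - by apply: hD => //; lia.
  - by apply: hDs; apply: hD => //; lia.
  - by apply: P1 => //; [rewrite prefix_refl| lia| lia].
exists m; split => i.
- have := hm i (ltn_addr _ (ltn_ord i)); rewrite ltn_ord /S inord_val.
  by [].
- have hi : n.+1 + i < n.+1 + n.+1 by rewrite ltn_add2l ltn_ord.
  have := hm _ hi.
  by rewrite ltnNge leq_addr /= addKn /S inord_val.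
Qed.
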